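(* Let $\sigma$ be a valid composite state of $\mathcal{M}uddy\mathcal{P}uzzle$ reachable by a valid trace from a composite initial state $\sigma^0$ with $\mathbf{consistent}(\sigma^0)$, and suppose $\sigma\notin S_F$. Then there exist a component $i$ and a valid transition (labeled $(i,l)$ for some $l$) from $\sigma$ to a state $\sigma'$ such that $\mathit{round}(\sigma'_i)>\mathit{round}(\sigma_i)$.
   Context: Fix $n \ge 1$ children indexed $1,\dots,n$. A message is a triple $\langle j, r, s\rangle$ with $j \in \{1,\dots,n\}$ (the sender), $r \in \mathbb{N}$ (a round number) and $s \in \{u,m,c\}$ (epistemic status: $u$ = ''does not know own status'', $m$ = ''knows they are muddy'', $c$ = ''knows they are clean''); $\bot$ denotes ''no message''. Child $i$ is a VLSM $\mathcal{C}_i$ with labels $\{\mathit{init},\mathit{emit},\mathit{receive}\}$, no initial messages, initial states $\langle \mathit{Obs}\rangle$ with $\mathit{Obs}\subseteq\{1,\dots,n\}$, and running states $\langle \mathit{Obs}, r, s\rangle$ with $\mathit{Obs}\subseteq\{1,\dots,n\}$, $r\in\mathbb{N}$, $s\in\{u,m,c\}$; $\mathit{Obs}(\cdot)$ denotes the observation set of either kind of state. Transitions $\tau_i$ and local validity $\beta_i$: - init: enabled only on an initial state $\langle\mathit{Obs}\rangle$ with input $\bot$; goes to $\langle \mathit{Obs},0,u\rangle$ if $\mathit{Obs}\ne\emptyset$ and to $\langle\mathit{Obs},0,m\rangle$ if $\mathit{Obs}=\emptyset$; output $\bot$. - emit: enabled only on a running state $\langle\mathit{Obs},r,s\rangle$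 with input $\bot$; state unchanged, output $\langle i,r,s\rangle$. - receive: on a running state $\langle\mathit{Obs},r,s\rangle$ with input message $\langle j,r',s'\rangle$, output $\bot$, new state given by the first applicable case: (R1) $s\in\{m,c\}$: unchanged. Otherwise $s=u$ and: (R2) $s'=c$, $j\notin\mathit{Obs}$, $r'=|\mathit{Obs}|$: $\langle\mathit{Obs},r',c\rangle$; (R3) $s'=c$, $j\notin\mathit{Obs}$, $r'=|\mathit{Obs}|+1$: $\langle\mathit{Obs},r'-1,m\rangle$; (R4) $s'=m$, $j\in\mathit{Obs}$, $r'=|\mathit{Obs}|$: $\langle\mathit{Obs},r',m\rangle$; (R5) $s'=m$, $j\in\mathit{Obs}$, $r'=|\mathit{Obs}|-1$: $\langle\mathit{Obs},r'+1,c\rangle$; (R6) $s'=u$, $j\in\mathit{Obs}$, $r'<r$: unchanged; (R7) $s'=u$, $j\in\mathit{Obs}$, $r\le r'<|\mathit{Obs}|-1$: $\langle\mathit{Obs},r'+1,u\rangle$; (R8) $s'=u$, $j\in\mathit{Obs}$, $r'=|\mathit{Obs}|-1$: $\langle\mathit{Obs},r'+1,m\rangle$; (R9) $s'=u$, $j\notin\mathit{Obs}$, $r'\le r$: unchanged; (R10) $s'=u$, $j\notin\mathit{Obs}$, $r<r'<|\mathit{Obs}|$: $\langle\mathit{Obs},r',u\rangle$; (R11) $s'=u$, $j\notin\mathit{Obs}$, $r'=|\mathit{Obs}|$: $\langle\mathit{Obs},r',m\rangle$. $\beta_i$ for receive holds exactly when one of (R1)–(R11) applies. Composition $\mathcal{M}uddy\mathcal{P}uzzle=(\mathcal{C}_1+\dots+\mathcal{C}_n)|_\varphi$: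 composite states are tuples $\sigma=(\sigma_1,\dots,\sigma_n)$; composite initial states ($S_0$) are those with every component initial; labels are pairs $(i,l)$; transition $(i,l)$ with input $\mu$ applies $\tau_i(l,\sigma_i,\mu)$ to component $i$, leaves the others unchanged, and is allowed iff $\beta_i(l,\sigma_i,\mu)\wedge\varphi((i,l),\sigma,\mu)$. For a composite state $\sigma$ let $M=\bigcup_{i}\mathit{Obs}(\sigma_i)$; $\mathbf{consistent}(\sigma)$ means $M\ne\emptyset$ and $\mathit{Obs}(\sigma_i)=M\setminus\{i\}$ for all $i$. The composition constraint: $\varphi((i,\mathit{init}),\sigma,\mu)=\mathbf{consistent}(\sigma)$; $\varphi((i,\mathit{emit}),\sigma,\mu)=\text{true}$; $\varphi((i,\mathit{receive}),\sigma,\langle j,r',s'\rangle)$ holds iff $\sigma_j$ is a running state $\langle \mathit{Obs}_j,r_j,s_j\rangle$ and $(s'=s_j\wedge r'=r_j)\vee(s'=u\wedge r'<r_j)$. Validity (VLSM sense): a transition is constrained if its input satisfies the constraint. Valid traces and valid messages are defined by simultaneous induction: a valid trace is a finite sequence of constrained transitions starting in a composite initial state in which every input message is either $\bot$ or a valid message; a valid message is one output by some transition of some valid trace. A valid state is one reachable by a valid trace; a valid transition is a constrained transition from a valid state whose input is $\bot$ or a valid message. $S_V$ is the set of valid states. The set of final states is $S_F=\{\sigma\in S_V \mid$ every component $\sigma_i$ is a running state with status $\ne u\}$. For a child state, $\mathit{round}(\langle\mathit{Obs}\rangle)=-1$ and $\mathit{round}(\langle\mathit{Obs},r,s\rangle)=r$.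 *)

(* Defs.v *)
(* Children are indexed by 'I_n (i.e. 0..n-1 instead of 1..n). *)
From mathcomp Require Import all_boot all_order all_algebra.
Set Implicit Arguments. Unset Strict Implicit. Unset Printing Implicit Defensive.
Import Order.TTheory GRing.Theory Num.Theory.

(* epistemic status: U = u (unknown), Mu = m (muddy), Cl = c (clean) *)
Inductive status := U | Mu | Cl.

Definition status_eqb (a b : status) : bool :=
  match a, b with U, U | Mu, Mu | Cl, Cl => true | _, _ => false end.

Definition msg (n : nat) : Type := ('I_n * nat * status)%type.

Inductive cstate (n : nat) : Type :=
| Init of {set 'I_n}
| Run of {set 'I_n} & nat & status.

Definition Obs n (st : cstate n) : {set 'I_n} :=
  match st with Init Ob => Ob | Run Ob _ _ => Ob end.

Inductive label := Linit | Lemit | Lreceive.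

(* receive on a running state <Ob, r, s> with input <j, r', s'>;
   None means that none of (R1)-(R11) applies (beta fails) *)
Definition recv n (Ob : {set 'I_n}) (r : nat) (s : status) (j : 'I_n)
  (r' : nat) (s' : status) : option (cstate n) :=
  match s with
  | Mu | Cl => Some (Run Ob r s)
  | U =>
    let k := #|Ob| in
    match s' with
    | Cl =>
      if (j \notin Ob) && (r' == k) then Some (Run Ob r' Cl)
      else if (j \notin Ob) && (r' == k.+1) then Some (Run Ob (r' - 1) Mu)
      else None
    | Mu =>
      if (j \in Ob) && (r' == k) then Some (Run Ob r' Mu)
      else if (j \in Ob) && (r'.+1 == k) then Some (Run Ob r'.+1 Cl)
      else None
    | U =>
      if j \in Ob then
        if r' < r then Some (Run Ob r U)
        else if (r <= r') && (r'.+1 < k) then Some (Run Ob r'.+1 U)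
        else if r'.+1 == k then Some (Run Ob r'.+1 Mu)
        else None
      else
        if r' <= r then Some (Run Ob r U)
        else if (r < r') && (r' < k) then Some (Run Ob r' U)
        else if r' == k then Some (Run Ob r' Mu)
        else None
    end
  end.

(* tau_i restricted to inputs where beta_i holds; None = beta_i fails *)
Definition child_step n (i : 'I_n) (l : label) (st : cstate n)
  (mu : option (msg n)) : option (cstate n * option (msg n)) :=
  match l, st, mu with
  | Linit, Init Ob, None => Some (Run Ob 0 (if Ob == set0 then Mu else U), None)
  | Lemit, Run Ob r s, None => Some (st, Some (i, r, s))
  | Lreceive, Run Ob r s, Some (j, r', s') =>
      match recv Ob r s j r' s' with
      | Some st' => Some (st', None)
      | None => None
      end
  | _, _, _ => None
  end.

Definition cstateV (n : nat) : Type := 'I_n -> cstate n.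

Definition initialV n (sg : cstateV n) : Prop :=
  forall i, exists Ob, sg i = Init Ob.

Definition bigM n (sg : cstateV n) : {set 'I_n} := \bigcup_(i < n) Obs (sg i).

Definition consistent n (sg : cstateV n) : bool :=
  (bigM sg != set0) && [forall i, Obs (sg i) == bigM sg :\ i].

Definition phi n (sg : cstateV n) (i : 'I_n) (l : label) (mu : option (msg n)) : bool :=
  match l with
  | Linit => consistent sg
  | Lemit => true
  | Lreceive =>
    match mu with
    | Some (j, r', s') =>
      match sg j with
      | Run _ rj sj => (status_eqb s' sj && (r' == rj)) || (status_eqb s' U && (r' < rj))
      | Init _ => false
      end
    | None => false
    end
  end.

Definition upd n (sg : cstateV n) (i : 'I_n) (st : cstate n) : cstateV n :=
  fun k => if k == i then st else sg k.

(* composite transition (i,l) with input mu; None = not allowed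
   (beta_i /\ phi fails) *)
Definition comp_step n (sg : cstateV n) (i : 'I_n) (l : label) (mu : option (msg n))
  : option (cstateV n * option (msg n)) :=
  match child_step i l (sg i) mu with
  | Some (st', o) => if phi sg i l mu then Some (upd sg i st', o) else None
  | None => None
  end.

(* valid_sm s o : s is reachable by a valid trace whose last output is o
   (simultaneous induction of valid states/traces and valid messages) *)
Inductive valid_sm n : cstateV n -> option (msg n) -> Prop :=
| vsm_init sg : initialV sg -> valid_sm sg None
| vsm_step sg o_sg mu i l sg' o :
    valid_sm sg o_sg ->
    (mu = None \/ exists sm, valid_sm sm mu) ->
    comp_step sg i l mu = Some (sg', o) ->
    valid_sm sg' o.

Definition valid_message n (m : msg n) : Prop := exists sm, valid_sm sm (Some m).

Definition valid_input n (mu : option (msg n)) : Prop :=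
  match mu with None => True | Some m => valid_message m end.

Definition valid_state n (sg : cstateV n) : Prop := exists o, valid_sm sg o.

Inductive reach n (s0 : cstateV n) : cstateV n -> Prop :=
| reach_refl : initialV s0 -> reach s0 s0
| reach_step sg mu i l sg' o :
    reach s0 sg -> valid_input mu ->
    comp_step sg i l mu = Some (sg', o) -> reach s0 sg'.

Definition in_SF n (sg : cstateV n) : Prop :=
  valid_state sg /\
  forall i, exists Ob r s, sg i = Run Ob r s /\ s <> U.

Definition round n (st : cstate n) : int :=
  match st with Init _ => (-1)%R | Run _ r _ => (r%:Z)%R end.

(* Main.v *)
Require Import Defs.
From mathcomp Require Import all_boot all_order all_algebra zify.
Import Order.TTheory GRing.Theory Num.Theory.
Set Implicit Arguments. Unset Strict Implicit. Unset Printing Implicit Defensive.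

Definition info n (M : {set 'I_n}) (x : 'I_n) (Ob : {set 'I_n}) (r : nat) (st : status) : Prop :=
  (st = U /\ r < #|Ob|) \/ (st = Mu /\ r = #|Ob| /\ x \in M) \/ (st = Cl /\ r = #|Ob| /\ x \notin M).

Lemma recv_inv n (M : {set 'I_n}) i j (Ob Obj : {set 'I_n}) (r : nat) (st : status) (rj : nat) (sj : status) (r' : nat) (s' : status) (st' : cstate n) :
  Ob = M :\ i -> Obj = M :\ j ->
  info M i Ob r st -> info M j Obj rj sj ->
  (j = i -> rj = r /\ sj = st) ->
  ((s' = sj /\ r' = rj) \/ (s' = U /\ r' < rj)) ->
  recv Ob r st j r' s' = Some st' ->
  Obs st' = Ob /\ (forall Ob2 r2 st2, st' = Run Ob2 r2 st2 -> info M i Ob2 r2 st2).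
Proof.
move=> EOb EObj Hi Hj Hji Hphi.
have cI := cardsD1 i M; have cJ := cardsD1 j M.
rewrite -EOb in cI; rewrite -EObj in cJ.
rewrite -[i \in M]/(i \in M) -[#|Ob|]/(#|Ob|) in cI.
rewrite -[j \in M]/(j \in M) -[#|Obj|]/(#|Obj|) in cJ.
have Hin : (j \in Ob) = (j != i) && (j \in M) by rewrite EOb in_setD1.
rewrite /recv Hin; clear EOb EObj.
case: Hi => [[? Hr]|[[? [? HiM]]|[? [? HiM]]]]; subst; last 2 first.
- by case=> <-; split=> // Ob2 r2 st2 [<- <- <-]; clear Ob2 r2 st2; right; left.
- by case=> <-; split=> // Ob2 r2 st2 [<- <- <-]; clear Ob2 r2 st2; right; right.
case: (eqVneq j i) => [Eji|Nji] /=.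
  have [? ?] := Hji Eji; subst.
  have [-> Hr'] : s' = U /\ r' <= r by case: Hphi=> [[-> ->]|[-> /ltnW]].
  rewrite ?eqxx /=.
  rewrite Hr'; case=> <-; split=> // Ob2 r2 st2 [<- <- <-]; clear Ob2 r2 st2; left; split=>//.
case: Hj => [[? Hrj]|[[? [? HjM]]|[? [? HjM]]]];
case: Hphi => [[? ?]|[? Hr'']]; subst;
repeat (let H := fresh "H" in case: ifP => H; try rewrite -[#|Ob|]/(#|Ob|) in H); try discriminate; case=> <-; split=> // Ob2 r2 st2 [<- <- <-]; clear Ob2 r2 st2;
rewrite /info; idtac; try (left; split=>//; lia); try (right; left; split=>//; split; lia);
try (right; right; split=>//; split; lia).
all: try (left; split; [done|]).
all: repeat match goal with H : is_true _ |- _ => revert H | H : @eq nat _ _ |- _ => revert H | H: (_ = false) |- _ => revert H end.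
all: rewrite -?[#|Ob|]/(#|Ob|) -?[#|Obj|]/(#|Obj|) -?[i \in M]/(i \in M) -?[j \in M]/(j \in M).
all: intros; first [left; split;[done|lia] | right; left; split;[done|split;lia] | right;right; split;[done|split;lia] | exfalso; lia].
Qed.


Lemma recv_prog n (M : {set 'I_n}) i j (Ob Obj : {set 'I_n}) (r rj : nat) (sj : status) :
  Ob = M :\ i -> Obj = M :\ j -> j \in Ob -> r < #|Ob| -> info M j Obj rj sj ->
  (sj = U -> r <= rj) ->
  exists Ob2 r2 st2, recv Ob r U j rj sj = Some (Run Ob2 r2 st2) /\ r < r2.
Proof.
move=> EOb EObj HjOb Hr Hj Hle.
have cI := cardsD1 i M; have cJ := cardsD1 j M.
rewrite -EOb in cI; rewrite -EObj in cJ.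
rewrite -[i \in M]/(i \in M) -[#|Ob|]/(#|Ob|) in cI.
rewrite -[j \in M]/(j \in M) -[#|Obj|]/(#|Obj|) in cJ.
have HjM : j \in M by move: HjOb; rewrite EOb in_setD1 => /andP[].
rewrite /recv HjOb; clear EOb EObj HjOb.
case: Hj => [[? Hrj]|[[? [? HjM']]|[? [? HjM']]]]; subst; last first.
  by rewrite HjM in HjM'.
all: repeat (let H := fresh "H" in case: ifP => H; try rewrite -[#|Ob|]/(#|Ob|) in H).
all: try (do 3 eexists; split; [reflexivity|]).
all: try (have := Hle erefl; clear Hle => Hle).
all: repeat match goal with H : is_true _ |- _ => revert H | H : @eq nat _ _ |- _ => revert H | H: (_ = false) |- _ => revert H end.
all: rewrite -?[#|Ob|]/(#|Ob|) -?[#|Obj|]/(#|Obj|) -?[i \in M]/(i \in M) -?[j \in M]/(j \in M).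
all: intros; lia.
Qed.

Definition inv n (s0 s : cstateV n) : Prop :=
  bigM s0 != set0 /\ forall x, Obs (s x) = bigM s0 :\ x /\
    forall Ob r st, s x = Run Ob r st -> info (bigM s0) x Ob r st.

Lemma inv0 n (s0 : cstateV n) : initialV s0 -> consistent s0 -> inv s0 s0.
Proof.
move=> Hi /andP[Hne /forallP H]; split=> // x; split; first exact/eqP/H.
by move=> Ob r st; case: (Hi x) => Ob' ->.
Qed.

Lemma status_eqbP a b : status_eqb a b -> a = b.
Proof. by case: a; case: b. Qed.

Lemma inv_step n (s0 s : cstateV n) i l mu s' o :
  inv s0 s -> comp_step s i l mu = Some (s', o) -> inv s0 s'.
Proof.
move=> [Hne H]; rewrite /comp_step.
case Hc: (child_step i l (s i) mu) => [[st' o']|] //.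
case Hp: (phi s i l mu) => //; case=> <- _.
have key: Obs st' = Obs (s i) /\
    forall Ob r st, st' = Run Ob r st -> info (bigM s0) i Ob r st.
{ have [EOb Hi] := H i.
  move: Hc Hp EOb Hi; case: l; case Hsi: (s i) => [Ob|Ob r st];
    case: mu => [[[j r'] s'']|] //=.
  - case=> <- _ _ EOb _; split=> // Ob2 r2 st2 [<- <- <-].
    case: eqP => [E0|/eqP N0].
      right; left; split=> //; split; first by rewrite E0 cards0.
      have := cardsD1 i (bigM s0); rewrite -EOb E0 cards0 addn0 => cM.
      apply/negPn/negP => Hni; move/negP: Hne; apply; apply/eqP; apply: cards0_eq.
      by rewrite cM (negbTE Hni).
    by left; split=> //; rewrite card_gt0.
  - by case=> <- _ _ _ Hi; split=> // Ob2 r2 st2 E; apply: Hi; rewrite E.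
  - case Hr: recv => [st''|] // [<- _]; rewrite /phi.
    case Hsj: (s j) => [Obj|Obj rj sj] // Hph EOb Hi.
    have [EObj Hj] := H j; rewrite Hsj /= in EObj Hj.
    apply: (recv_inv EOb EObj (Hi _ _ _ erefl) (Hj _ _ _ erefl) _ _ Hr).
      by move=> E; subst j; rewrite Hsi in Hsj; case: Hsj => _ -> ->.
    case/orP: Hph => /andP[/status_eqbP -> Hr'].
      by left; split=> //; apply/eqP.
    by right.
}
split=> // x; rewrite /upd; case: eqP => [->|_]; last exact: H.
have [EOb _] := H i; split; last exact: key.2.
by rewrite key.1.
Qed.

Lemma reach_inv n (s0 s : cstateV n) :
  initialV s0 -> consistent s0 -> reach s0 s -> inv s0 s /\ exists o, valid_sm s o.
Proof.
move=> Hi Hc; elim=> [Hi'|sg mu i l sg' o _ [Hinv [o' Hv]] Hmu Hstep].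
  by split; [exact: inv0 | exists None; exact: vsm_init].
split; first exact: inv_step Hstep.
exists o; apply: vsm_step Hv _ Hstep.
by case: mu Hmu => [m|] /=; [right | left].
Qed.

Lemma recv_comp n (s : cstateV n) i j Ob r st Obj rj sj st' :
  s i = Run Ob r st -> s j = Run Obj rj sj -> recv Ob r st j rj sj = Some st' ->
  comp_step s i Lreceive (Some (j, rj, sj)) = Some (upd s i st', None).
Proof.
move=> Hi Hj Hr; rewrite /comp_step Hi /= Hr /phi Hj eqxx andbT.
by case: sj {Hj Hr}.
Qed.

Lemma emit_valid n (s : cstateV n) o j Obj rj sj :
  valid_sm s o -> s j = Run Obj rj sj -> valid_input (Some (j, rj, sj)).
Proof.
move=> Hv Hj; exists (upd s j (s j)).
apply: (vsm_step (mu := None) (i := j) (l := Lemit) Hv); first by left.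
by rewrite /comp_step Hj.
Qed.

Unset Implicit Arguments.
Theorem mainTheorem4 (n : nat) (hn : 0 < n) (s0 s : cstateV n) :
  initialV s0 -> consistent s0 -> reach s0 s -> ~ in_SF s ->
  exists (i : 'I_n) (l : label) (mu : option (msg n)) (s' : cstateV n)
         (o : option (msg n)),
    valid_input mu /\ comp_step s i l mu = Some (s', o) /\
    (round (s i) < round (s' i))%R.
Proof.
move=> Hi0 Hc0 Hr HSF.
have [[Hne Hinv] [o Hv]] := reach_inv Hi0 Hc0 Hr.
have Obs0 : forall x, Obs (s0 x) = bigM s0 :\ x.
  by move: Hc0 => /andP[_ /forallP H] x; apply/eqP.
case: (boolP [exists x, if s x is Init _ then true else false]).
  case/existsP=> x; case Hx: (s x) => [Ob|] // _.
  have Hcons : consistent s.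
    have EM : bigM s = bigM s0.
      by apply: eq_bigr => y _; rewrite (Hinv y).1 Obs0.
    rewrite /consistent EM Hne /=; apply/forallP=> y; by rewrite (Hinv y).1.
  exists x, Linit, None, (upd s x (Run Ob 0 (if Ob == set0 then Mu else U))), None.
  split=> //; split; first by rewrite /comp_step Hx /= Hcons.
  by rewrite /upd eqxx Hx.
rewrite negb_exists => /forallP Hrun.
have Hrun' : forall x, exists Ob r st, s x = Run Ob r st.
  by move=> x; move: (Hrun x); case: (s x) => // Ob r st _; exists Ob, r, st.
have [x [Ob [r Hx]]] : exists x Ob r, s x = Run Ob r U.
  case: (boolP [exists x, if s x is Run _ _ U then true else false]).
    by case/existsP=> x; case Hx: (s x) => [|Ob r []] //; exists x, Ob, r.
  rewrite negb_exists => /forallP Hno; exfalso; apply: HSF; split; first by exists o.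
  move=> x; have [Ob [r [st Hx]]] := Hrun' x; exists Ob, r, st; split=> //.
  by move=> E; subst st; move: (Hno x); rewrite Hx.
suff gen : forall N r i Ob, r < N -> s i = Run Ob r U ->
  exists (i : 'I_n) (l : label) (mu : option (msg n)) (s' : cstateV n)
         (o : option (msg n)),
    valid_input mu /\ comp_step s i l mu = Some (s', o) /\
    (round (s i) < round (s' i))%R.
  exact: (gen r.+1 r x Ob (ltnSn r) Hx).
clear x Ob r Hx. elim=> [|N IH] r i Ob Hlt Hsi //.
have [EOb Hi] := Hinv i; rewrite Hsi /= in EOb.
have [[_ HrOb]|[[E _]|[E _]]] := Hi _ _ _ Hsi; try discriminate.
have /set0Pn [j HjOb] : Ob != set0 by rewrite -card_gt0; lia.
have [Obj [rj [sj Hsj]]] := Hrun' j.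
have [EObj Hj] := Hinv j; rewrite Hsj /= in EObj.
have Hjinfo := Hj _ _ _ Hsj.
case: (boolP (if sj is U then rj < r else false)) => [Hlt'|Hnot].
  case: sj Hsj Hjinfo Hlt' => // Hsj _ Hlt'; apply: (IH rj j Obj _ Hsj); lia.
have Hle : sj = U -> r <= rj.
  by move=> E; move: Hnot; rewrite E -leqNgt.
have [Ob2 [r2 [st2 [Hrecv Hlt2]]]] := recv_prog EOb EObj HjOb HrOb Hjinfo Hle.
exists i, Lreceive, (Some (j, rj, sj)), (upd s i (Run Ob2 r2 st2)), None.
split; first exact: emit_valid Hv Hsj.
split; first exact: recv_comp Hsi Hsj Hrecv.
by rewrite /upd eqxx Hsi /= ltz_nat.
Qed.
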